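(* Let $(X,\mathcal U)$ be a non-archimedean uniform space. For every $n\in\mathbb N$, the set $B_n$ of all elements of $A(X)$ of length at most $n$ is closed in $A_{NA}(X,\mathcal U)$.
   Context: A uniform space is non-archimedean if its (Hausdorff) uniformity has a base of equivalence relations. $A_{NA}(X,\mathcal U)$ is the free abelian non-archimedean group of $(X,\mathcal U)$: the abelian Hausdorff group with a local base at $0$ of open subgroups, realized on the free abelian group $A(X)$, such that every uniformly continuous map from $X$ into an abelian non-archimedean group extends uniquely to a continuous homomorphism. The length of a nonzero $w=\sum_{i=1}^n k_ix_i\in A(X)$ (distinct $x_i\in X$, $k_i\in\mathbb Z\setminus\{0\}$) is $\sum_i|k_i|$; the length of $0$ is $0$. *)

(* Defs.v *)
From HB Require Import structures.
From mathcomp Require Import all_boot all_order all_algebra.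
From mathcomp Require Import all_classical all_reals all_analysis.
From mathcomp Require Import freeg.
Set Implicit Arguments. Unset Strict Implicit. Unset Printing Implicit Defensive.
Import Order.TTheory GRing.Theory Num.Theory.
Local Open Scope classical_set_scope.
Local Open Scope ring_scope.

Definition AX (X : uniformType) := {freeg X / int}.

Definition gen (X : uniformType) (x : X) : AX X := << x >>.

Definition fg_length (X : uniformType) (w : AX X) : nat :=
  (\sum_(x <- dom w) `|coeff x w|%N)%N.

Definition Bn (X : uniformType) (n : nat) : set (AX X) :=
  [set w | (fg_length w <= n)%N].

Definition equiv_rel_set (T : Type) (E : set (T * T)) : Prop :=
  [/\ forall x, E (x, x),
      forall x y, E (x, y) -> E (y, x) &
      forall x y z, E (x, y) -> E (y, z) -> E (x, z)].

Definition non_archimedean_uniform (X : uniformType) : Prop :=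
  hausdorff_space X /\
  forall U : set (X * X), entourage U -> exists2 E : set (X * X), entourage E & equiv_rel_set E /\ E `<=` U.

Definition is_subgroup (G : zmodType) (H : set G) : Prop :=
  [/\ H 0, forall a b, H a -> H b -> H (a + b) & forall a, H a -> H (- a)].

(* A subgroup H of A(X) is a basic open subgroup of A_NA(X,U) iff the
   embedding X -> A(X) is "uniformly continuous with respect to H", i.e.
   some entourage E satisfies x - y \in H for all (x,y) \in E.  These
   subgroups form a base at 0 of the topology of A_NA(X,U): it is the finest
   abelian group topology on A(X) with a base at 0 of open subgroups making
   X -> A(X) uniformly continuous, which is exactly the universal one. *)
Definition NA_basic_subgroup (X : uniformType) (H : set (AX X)) : Prop :=
  is_subgroup H /\
  exists2 E : set (X * X), entourage E & forall x y, E (x, y) -> H (gen x - gen y).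

Definition ANA_open (X : uniformType) (O : set (AX X)) : Prop :=
  forall w, O w -> exists2 H, NA_basic_subgroup H & forall h, H h -> O (w + h).

Definition ANA_closed (X : uniformType) (C : set (AX X)) : Prop :=
  ANA_open (~` C).

(* Main.v *)
Require Import Defs.
From mathcomp Require Import all_boot all_order all_algebra.
From mathcomp Require Import all_classical all_reals all_analysis.
From mathcomp Require Import freeg.
Import Order.TTheory GRing.Theory Num.Theory.
Local Open Scope classical_set_scope.
Local Open Scope ring_scope.

Lemma sep2 (X : uniformType) (hX : hausdorff_space X) (a b : X) :
  a != b -> exists2 U : set (X * X), entourage U & ~ U (a, b).
Proof.
move=> ab; apply: contrapT => hn; move/eqP: ab; apply; apply: hX.
move=> A B; rewrite -filter_from_entourageE => -[U eU sUA] nB.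
exists b; split; last exact: nbhs_singleton.
apply: sUA; rewrite /xsection /=.
apply: contrapT => nU; apply: hn; exists U => // h; apply: nU; exact/mem_set.
Qed.

Lemma sepl (X : uniformType) (hX : hausdorff_space X) (l : seq (X * X)) :
  (forall p, p \in l -> p.1 != p.2) ->
  exists2 U : set (X * X), entourage U & forall p, p \in l -> ~ U p.
Proof.
elim: l => [|p l IH] hl.
  by exists setT => //; exact: entourageT.
have [U eU hU] := IH (fun q ql => hl q (mem_behead (ql : q \in behead (p :: l)))).
have [V eV hV] := @sep2 X hX p.1 p.2 (hl p (mem_head _ _)).
exists (U `&` V); first exact: filterI.
move=> q; rewrite inE => /predU1P [->|ql] [Uq Vq].
  by case: p {hl Uq} hV Vq.
exact: hU ql Uq.
Qed.

Lemma fglift_dom (X : choiceType) (M : lmodType int) (f : X -> M) (D : {freeg X / int}) :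
  fglift f D = \sum_(x <- dom D) coeff x D *: f x.
Proof. by rewrite -{1}(Freeg_dom D) fglift_Freeg /prelift big_map. Qed.

Lemma count_le1 (T : eqType) (P : pred T) (s : seq T) : uniq s ->
  (forall a b, a \in s -> b \in s -> P a -> P b -> a = b) -> (count P s <= 1)%N.
Proof.
move=> us hP; rewrite -size_filter.
case E: (seq.filter P s) => [|x t] //.
have : x \in seq.filter P s by rewrite E mem_head.
rewrite mem_filter => /andP [Px xs].
have -> : x :: t = seq.filter P s by [].
apply: (@uniq_leq_size _ _ [:: x]); first exact: filter_uniq.
move=> z; rewrite mem_filter => /andP [Pz zs]; rewrite inE; apply/eqP.
exact: hP.
Qed.

Theorem lemma4p19 (X : uniformType) (hX : non_archimedean_uniform X) (n : nat) :
  ANA_closed (@Bn X n).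
Proof.
case: hX => hH hE w /= hw.
set s := dom w.
have [U eU hU] := @sepl X hH [seq p <- [seq (a, b) | a <- s, b <- s] | p.1 != p.2]
  (fun p hp => ltac:(by move: hp; rewrite mem_filter => /andP [])).
have [E eE [[Erefl Esym Etrans] EU]] := hE U eU.
have sepE : forall a b, a \in s -> b \in s -> E (a, b) -> a = b.
  move=> a b ha hb Eab; apply/eqP; apply: contraT => nab.
  case: (hU (a, b) _ (EU _ Eab)).
  by rewrite mem_filter /= nab; apply/allpairsP; exists (a, b).
pose chi (a y : X) : int := (`[< E (a, y) >])%:R.
pose phi (a : X) (h : AX X) : int := fglift (fun y => (chi a y : int^o)) h.
have phiB : forall a u v, phi a (u - v) = phi a u - phi a v.
  by move=> a u v; apply: (@lift_is_additive int X int^o (fun y => chi a y)).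
have phi0 : forall a, phi a 0 = 0 by move=> a; rewrite -(subrr 0) phiB subrr.
have phiN : forall a u, phi a (- u) = - phi a u.
  by move=> a u; rewrite -sub0r phiB phi0 sub0r.
have phiD : forall a u v, phi a (u + v) = phi a u + phi a v.
  by move=> a u v; have := phiB a u (- v); rewrite opprK => ->; rewrite phiN opprK.
have phiE : forall a u, phi a u = \sum_(y <- dom u) coeff y u * chi a y.
  by move=> a u; rewrite /phi fglift_dom.
pose H := [set h : AX X | forall a, a \in s -> phi a h = 0].
exists H.
  split.
    split.
    - by move=> a _; rewrite phi0.
    - by move=> u v hu hv a ha; rewrite phiD hu // hv // addr0.
    - by move=> u hu a ha; rewrite phiN hu // oppr0.
  exists E => // x y Exy a ha.
  rewrite phiB /phi /gen !liftU !scale1r /chi.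
  suff -> : `[< E (a, x) >] = `[< E (a, y) >] by rewrite subrr.
  apply/idP/idP => /asboolP h; apply/asboolP; by eauto.
move=> h hh; apply/negP; move: hw => /negP; apply: contra => hl.
apply: leq_trans hl.
set u := w + h.
have phiw : forall a, a \in s -> phi a u = coeff a w.
  move=> a ha; rewrite phiD hh // addr0 phiE (bigD1_seq a) //= ?uniq_dom //.
  rewrite big1_seq ?addr0.
    by rewrite /chi; have /asboolP -> : E (a, a) by []; rewrite mulr1.
  move=> y /andP [ya ys]; rewrite /chi.
  case: asboolP => [Eay|]; last by rewrite mulr0.
  by move: ya; rewrite (sepE a y ha ys Eay) eqxx.
rewrite -lez_nat /fg_length.
rewrite !(big_morph Posz PoszD (erefl (Posz 0%N))).
have -> : \sum_(i <- s) (Posz `|coeff i w|%N) = \sum_(a <- s) `|phi a u|.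
  by apply: eq_big_seq => a ha; rewrite abszE phiw.
have -> : \sum_(i <- dom u) (Posz `|coeff i u|%N) = \sum_(y <- dom u) `|coeff y u|.
  by apply: eq_bigr => a _; rewrite abszE.
apply: (@le_trans _ _ (\sum_(a <- s) \sum_(y <- dom u) `|coeff y u| * chi a y)).
  apply: ler_sum => a _; rewrite phiE.
  apply: (le_trans (ler_norm_sum _ _ _)); apply: ler_sum => y _.
  by rewrite normrM /chi normr_nat.
rewrite exchange_big /=; apply: ler_sum => y _.
rewrite -mulr_sumr; apply: ler_piMr => //.
have -> : \sum_(i <- s) chi i y = (count (fun i => `[< E (i, y) >]) s)%:R.
  rewrite /chi -natr_sum -sum1_count [in RHS]big_mkcond /=.
  by congr (_%:R); apply: eq_bigr => i _; case: asboolP.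
rewrite lern1; apply: count_le1; first exact: uniq_dom.
move=> a b ha hb /asboolP Eay /asboolP Eby.
by apply: sepE => //; apply: Etrans Eay (Esym _ _ Eby).
Qed.
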